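(* Let $Z$ be a real random variable with $|Z|\le L$ almost surely, where $L\ge1$. Then $$\big|\tanh(\mathbb EZ)-\mathbb E\tanh(Z)\big|\le20L\cdot\mathbb E\big|\tanh(Z)-\mathbb E\tanh(Z)\big|.$$ *)

(* Defs.v *)
From Stdlib Require Import Reals.
Open Scope R_scope.

(* The law of a real random variable Z with |Z| <= L a.s. is a Borel
   probability measure mu on [-L, L].  Since mathcomp-analysis / measure
   theory is not available, we represent it (Riesz representation) by its
   expectation functional  E f = E[f(Z)] = \int f dmu,  on continuous f:
   a linear, positive (w.r.t. values on [-L,L]) and normalized functional.
   Every such Z yields such an E, and conversely every such E is the
   expectation functional of some Z with |Z| <= L a.s. *)
Record is_bounded_expectation (L : R) (E : (R -> R) -> R) : Prop := {
  bexp_linear : forall (f g : R -> R) (a b : R),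
      continuity f -> continuity g ->
      E (fun x => a * f x + b * g x) = a * E f + b * E g;
  bexp_pos : forall f : R -> R, continuity f ->
      (forall x, - L <= x <= L -> 0 <= f x) -> 0 <= E f;
  bexp_one : E (fun _ => 1) = 1
}.

(* Main.v *)
Require Import Defs.
From Stdlib Require Import Reals.
Open Scope R_scope.
From Stdlib Require Import Reals Lra Psatz FunctionalExtensionality.
Open Scope R_scope.

Lemma tanh_exp x : tanh x = (exp (2*x) - 1) / (exp (2*x) + 1).
Proof.
  unfold tanh, sinh, cosh. rewrite exp_Ropp.
  replace (2*x) with (x+x) by ring. rewrite exp_plus.
  pose proof (exp_pos x) as Hp.
  field. split; [|lra]. nra.
Qed.

Lemma tanh_add x y : tanh (x+y) = (tanh x + tanh y) / (1 + tanh x * tanh y).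
Proof.
  rewrite !tanh_exp. replace (2*(x+y)) with (2*x+2*y) by ring. rewrite exp_plus.
  pose proof (exp_pos (2*x)) as HP. pose proof (exp_pos (2*y)) as HQ.
  set (P := exp (2*x)) in *. set (Q := exp (2*y)) in *.
  field. repeat split; nra.
Qed.

Lemma tanh_bounds x : -1 < tanh x < 1.
Proof.
  rewrite tanh_exp. pose proof (exp_pos (2*x)) as HP. set (P := exp (2*x)) in *.
  split; [apply Rmult_lt_reg_r with (P+1)|apply Rmult_lt_reg_r with (P+1)]; try lra;
  unfold Rdiv; rewrite Rmult_assoc, Rinv_l; lra.
Qed.

Lemma tanh_odd x : tanh (-x) = - tanh x.
Proof.
  unfold tanh, sinh, cosh. rewrite Ropp_involutive.
  pose proof (exp_pos x). pose proof (exp_pos (-x)). field. lra.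
Qed.

Lemma tanh_lower x : 0 <= x -> x / (1 + x) <= tanh x.
Proof.
  intro Hx. rewrite tanh_exp. pose proof (exp_ineq1_le (2*x)) as H1. pose proof (exp_pos (2*x)) as HP.
  set (P := exp (2*x)) in *.
  apply Rmult_le_reg_r with ((1+x)*(P+1)). nra.
  replace (x / (1 + x) * ((1 + x) * (P + 1))) with (x*(P+1)) by (field; lra).
  replace ((P - 1) / (P + 1) * ((1 + x) * (P + 1))) with ((P-1)*(1+x)) by (field; lra).
  nra.
Qed.

Lemma tanh_pos x : 0 < x -> 0 < tanh x.
Proof.
  intro Hx. pose proof (tanh_lower x (Rlt_le _ _ Hx)).
  assert (0 < x / (1+x)) by (apply Rdiv_lt_0_compat; lra). lra.
Qed.

Lemma tanh_neg x : x < 0 -> tanh x < 0.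
Proof.
  intro Hx. pose proof (tanh_pos (-x)). rewrite tanh_odd in H. lra.
Qed.

Lemma tanh_0 : tanh 0 = 0.
Proof. unfold tanh. rewrite sinh_0. lra. Qed.

Lemma sinh_nonneg c : 0 <= c -> 0 <= sinh c.
Proof.
  intro Hc. unfold sinh. destruct (Req_dec c 0) as [->|Hn].
  - rewrite Ropp_0. lra.
  - pose proof (exp_increasing (-c) c ltac:(lra)). lra.
Qed.

Lemma cosh_pos c : 0 < cosh c.
Proof. unfold cosh. pose proof (exp_pos c). pose proof (exp_pos (-c)). lra. Qed.

Lemma tanh_le_id x : 0 <= x -> tanh x <= x.
Proof.
  intro Hx. destruct (Req_dec x 0) as [->|Hn]. { rewrite tanh_0; lra. }
  set (f := fun y => y * cosh y - sinh y).
  assert (Hd : forall c, 0 <= c <= x -> derivable_pt_lim f c ((1 * cosh c + c * sinh c) - cosh c)).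
  { intros c _. apply (derivable_pt_lim_minus (fun y => y * cosh y) sinh).
    - apply (derivable_pt_lim_mult id cosh). apply derivable_pt_lim_id. apply derivable_pt_lim_cosh.
    - apply derivable_pt_lim_sinh. }
  destruct (MVT_cor2 f _ 0 x ltac:(lra) Hd) as [c [Hc Hcx]].
  pose proof (sinh_nonneg c ltac:(lra)) as Hs.
  assert (H0 : f 0 = 0) by (unfold f; rewrite sinh_0; ring). rewrite H0 in Hc.
  assert (Hf : 0 <= f x). { rewrite !Rminus_0_r in Hc. rewrite Hc. replace ((1 * cosh c + c * sinh c - cosh c) * x) with (c * sinh c * x) by ring. apply Rmult_le_pos; [apply Rmult_le_pos|]; lra. }
  unfold f in Hf. unfold tanh. pose proof (cosh_pos x) as Hcx'.
  apply Rmult_le_reg_r with (cosh x); auto.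
  unfold Rdiv. rewrite Rmult_assoc, Rinv_l; lra.
Qed.
Lemma cont_tanh : continuity tanh.
Proof.
  change (continuity (div_fct sinh cosh)). apply continuity_div.
  - apply derivable_continuous, derivable_sinh.
  - apply derivable_continuous, derivable_cosh.
  - intro x. pose proof (cosh_pos x). lra.
Qed.

Lemma cont_id : continuity (fun z => z).
Proof. change (continuity id). apply derivable_continuous, derivable_id. Qed.

Lemma cont_const c : continuity (fun _ => c).
Proof. apply continuity_const. intros x y. reflexivity. Qed.

Lemma cont_abs c : continuity (fun z => Rabs (tanh z - c)).
Proof.
  change (continuity (comp Rabs (minus_fct tanh (fct_cte c)))).
  apply continuity_comp; [apply continuity_minus; [apply cont_tanh| apply cont_const] | exact Rcontinuity_abs].
Qed.

Lemma cont_lin f g a b : continuity f -> continuity g -> continuity (fun x => a * f x + b * g x).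
Proof.
  intros Hf Hg. change (continuity (plus_fct (mult_real_fct a f) (mult_real_fct b g))).
  apply continuity_plus; apply continuity_scal; auto.
Qed.

Lemma cont_neg f : continuity f -> continuity (fun x => f (-x)).
Proof.
  intro Hf. change (continuity (comp f (opp_fct id))). apply continuity_comp; auto.
  apply continuity_opp. apply derivable_continuous, derivable_id.
Qed.



Lemma E_lin L E (hE : is_bounded_expectation L E) f g a b (h : R -> R) :
  continuity f -> continuity g -> (forall x, h x = a * f x + b * g x) -> E h = a * E f + b * E g.
Proof.
  intros Hf Hg Hh. replace h with (fun x => a * f x + b * g x).
  - apply (bexp_linear L E hE); auto.
  - apply functional_extensionality. intro x. now rewrite Hh.
Qed.

Lemma E_const L E (hE : is_bounded_expectation L E) c : E (fun _ => c) = c.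
Proof.
  rewrite (E_lin L E hE (fun _ => 1) (fun _ => 1) c 0); try apply cont_const.
  - rewrite (bexp_one L E hE). ring.
  - intro. ring.
Qed.

Lemma E_lin3 L E (hE : is_bounded_expectation L E) f g a b c (h : R -> R) :
  continuity f -> continuity g -> (forall x, h x = a * f x + b * g x + c) -> E h = a * E f + b * E g + c.
Proof.
  intros Hf Hg Hh.
  rewrite (E_lin L E hE (fun x => a * f x + b * g x) (fun _ => 1) 1 c h).
  - rewrite (E_lin L E hE f g a b (fun x => a * f x + b * g x)); auto.
    rewrite (bexp_one L E hE). ring.
  - apply cont_lin; auto.
  - apply cont_const.
  - intro x. rewrite Hh. ring.
Qed.

Lemma E_mono L E (hE : is_bounded_expectation L E) f g :
  continuity f -> continuity g -> (forall x, -L <= x <= L -> f x <= g x) -> E f <= E g.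
Proof.
  intros Hf Hg Hle.
  assert (H : 0 <= E (fun x => 1 * g x + (-1) * f x)).
  { apply (bexp_pos L E hE). apply cont_lin; auto. intros x Hx. specialize (Hle x Hx). lra. }
  rewrite (bexp_linear L E hE) in H; auto. lra.
Qed.

Lemma tanh_shift m d :
  (tanh (m + d) - tanh m) * (1 + tanh m * tanh d) = tanh d * (1 - tanh m ^ 2).
Proof.
  rewrite tanh_add. pose proof (tanh_bounds m). pose proof (tanh_bounds d).
  assert (0 < 1 + tanh m * tanh d) by nra. field. lra.
Qed.

Lemma tanh_lower' d L : 1 <= L -> 0 <= d -> 1 + d <= L -> d <= L * tanh d.
Proof.
  intros hL Hd HdL. pose proof (tanh_lower d Hd).
  assert (d <= (1+d) * tanh d).
  { apply Rmult_le_compat_l with (r := 1+d) in H; [|lra].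
    replace ((1+d) * (d / (1+d))) with d in H by (field; lra). lra. }
  assert (0 <= tanh d) by (destruct (Req_dec d 0) as [->|]; [rewrite tanh_0; lra| pose proof (tanh_pos d); lra]).
  nra.
Qed.

Lemma E_bound L E (hE : is_bounded_expectation L E) (h : R -> R) K t :
  continuity h -> (forall x, -L <= x <= L -> h x <= K * Rabs (tanh x - t)) ->
  E h <= K * E (fun z => Rabs (tanh z - t)).
Proof.
  intros Hh Hle.
  apply Rle_trans with (E (fun x => K * Rabs (tanh x - t) + 0 * Rabs (tanh x - t))).
  - apply (E_mono L E hE); auto. apply cont_lin; apply cont_abs.
    intros x Hx. specialize (Hle x Hx). lra.
  - rewrite (bexp_linear L E hE); try apply cont_abs. lra.
Qed.

Lemma pointB L m t z : 1 <= L -> 0 <= m <= L -> tanh m <= t -> -L <= z <= L ->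
  tanh z - tanh m - (1 - tanh m ^ 2) * (z - m) <= 3 * L * Rabs (tanh z - t).
Proof.
  intros hL Hm Ht Hz.
  set (T := tanh m) in *. set (s := 1 - T ^ 2).
  assert (HT : 0 <= T < 1).
  { pose proof (tanh_bounds m). unfold T. destruct (Req_dec m 0) as [->|]; [rewrite tanh_0; lra| pose proof (tanh_pos m); lra]. }
  assert (Hs : 0 < s) by (unfold s; nra).
  pose proof (Rabs_pos (tanh z - t)).
  destruct (Rle_lt_dec m z) as [Hmz|Hzm].
  - set (d := z - m). pose proof (tanh_shift m d) as Hsh.
    replace (m + d) with z in Hsh by (unfold d; ring). fold T s in Hsh.
    assert (Hd : 0 <= d) by (unfold d; lra).
    pose proof (tanh_le_id d Hd).
    assert (0 <= tanh d) by (destruct (Req_dec d 0) as [->|]; [rewrite tanh_0; lra| pose proof (tanh_pos d); lra]).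
    pose proof (tanh_bounds d).
    assert (0 <= tanh z - T).
    { assert (0 < 1 + T * tanh d) by nra.
      assert (0 <= (tanh z - T) * (1 + T * tanh d)) by (rewrite Hsh; nra). nra. }
    assert (0 <= (tanh z - T) * (T * tanh d)) by (apply Rmult_le_pos; [lra|apply Rmult_le_pos; lra]).
    assert (tanh z - T <= tanh d * s) by nra.
    assert (tanh d * s <= d * s) by nra.
    fold d. nra.
  - set (d := m - z). pose proof (tanh_shift m (-d)) as Hsh.
    replace (m + - d) with z in Hsh by (unfold d; ring). fold T s in Hsh.
    rewrite tanh_odd in Hsh.
    assert (Hd : 0 <= d) by (unfold d; lra).
    assert (0 <= tanh d) by (destruct (Req_dec d 0) as [->|]; [rewrite tanh_0; lra| pose proof (tanh_pos d); lra]).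
    pose proof (tanh_bounds d).
    assert (Y : (T - tanh z) * (1 - T * tanh d) = tanh d * s) by nra.
    assert (0 <= T - tanh z).
    { assert (0 < 1 - T * tanh d) by nra. nra. }
    assert (0 <= (T - tanh z) * (T * tanh d)) by (apply Rmult_le_pos; [lra|apply Rmult_le_pos; lra]).
    assert (tanh d * s <= T - tanh z) by nra.
    assert (d <= 3 * L * tanh d) by (apply tanh_lower'; unfold d; lra).
    assert (T - tanh z <= Rabs (tanh z - t)).
    { rewrite Rabs_minus_sym. apply Rle_trans with (t - tanh z); [lra| apply Rle_abs]. }
    replace (z - m) with (-d) by (unfold d; ring).
    assert (s * d <= s * (3 * L * tanh d)) by (apply Rmult_le_compat_l; lra).
    nra.
Qed.

Lemma pointA1 L t z : 1 <= L -> t <= 0 -> -L <= z <= L ->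
  z - tanh z <= 2 * L * Rabs (tanh z - t).
Proof.
  intros hL Ht Hz. pose proof (Rabs_pos (tanh z - t)).
  destruct (Rle_lt_dec z 0) as [H0|H0].
  - pose proof (tanh_le_id (-z) ltac:(lra)). rewrite tanh_odd in H1. nra.
  - assert (z <= 2 * L * tanh z) by (apply tanh_lower'; lra).
    pose proof (tanh_pos z H0).
    assert (tanh z - t <= Rabs (tanh z - t)) by apply Rle_abs. nra.
Qed.

Lemma pointA2 L t a z : 1 <= L -> 0 < t < 1 -> 0 <= a -> tanh a = t -> -L <= z <= L ->
  (1 - t ^ 2) * (z - a) <= 4 * L * Rabs (tanh z - t).
Proof.
  intros hL Ht Ha Hta Hz. pose proof (Rabs_pos (tanh z - t)).
  assert (Hs : 0 < 1 - t^2) by nra.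
  destruct (Rle_lt_dec z a) as [H0|H0].
  - nra.
  - set (d := z - a). pose proof (tanh_shift a d) as Hsh.
    replace (a + d) with z in Hsh by (unfold d; ring). rewrite Hta in Hsh.
    assert (Hd : 0 < d) by (unfold d; lra).
    pose proof (tanh_pos d Hd). pose proof (tanh_bounds d).
    assert (0 <= tanh z - t).
    { assert (0 < 1 + t * tanh d) by nra. nra. }
    assert ((tanh z - t) * (t * tanh d) <= (tanh z - t) * 1) by (apply Rmult_le_compat_l; nra).
    assert (tanh d * (1 - t^2) <= 2 * (tanh z - t)) by nra.
    assert (d <= 2 * L * tanh d) by (apply tanh_lower'; unfold d; lra).
    assert (tanh z - t <= Rabs (tanh z - t)) by apply Rle_abs.
    fold d.
    assert ((1 - t^2) * d <= (1 - t^2) * (2 * L * tanh d)) by (apply Rmult_le_compat_l; lra).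
    nra.
Qed.

Lemma main_pos L E (hL : 1 <= L) (hE : is_bounded_expectation L E) :
  0 <= E (fun z => z) ->
  Rabs (tanh (E (fun z => z)) - E tanh) <= 4 * L * E (fun z => Rabs (tanh z - E tanh)).
Proof.
  intro Hm.
  set (m := E (fun z => z)) in *. set (t := E tanh) in *.
  set (D := E (fun z => Rabs (tanh z - t))).
  assert (HmL : m <= L).
  { unfold m. apply Rle_trans with (E (fun _ => L)); [|rewrite (E_const L E hE); lra]. apply (E_mono L E hE).
    apply cont_id. apply cont_const. intros; lra. }
  assert (HD : 0 <= D).
  { unfold D. apply Rle_trans with (E (fun _ => 0)); [rewrite (E_const L E hE); lra|]. apply (E_mono L E hE).
    apply cont_const. apply cont_abs. intros; apply Rabs_pos. }
  set (T := tanh m).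
  assert (HT : 0 <= T < 1).
  { pose proof (tanh_bounds m). unfold T. destruct (Req_dec m 0) as [->|]; [rewrite tanh_0; lra| pose proof (tanh_pos m); lra]. }
  apply Rabs_le.
  destruct (Rle_lt_dec T t) as [HB|HA].
  -
    set (s := 1 - T ^ 2).
    assert (Hg : E (fun z => tanh z - T - s * (z - m)) = t - T).
    { rewrite (E_lin3 L E hE tanh (fun z => z) 1 (-s) (s * m - T)); try apply cont_tanh; try apply cont_id.
      fold t m. ring. intro x. ring. }
    assert (E (fun z => tanh z - T - s * (z - m)) <= 3 * L * D).
    { apply (E_bound L E hE). 
      - replace (fun z => tanh z - T - s * (z - m)) with (fun z => 1 * tanh z + (-s) * z + (s * m - T)).
        2:{ apply functional_extensionality; intro; ring. }
        change (continuity (plus_fct (fun z => 1 * tanh z + (-s) * z) (fct_cte (s*m - T)))).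
        apply continuity_plus. apply cont_lin. apply cont_tanh. apply cont_id. apply cont_const.
      - intros x Hx. apply pointB; auto. }
    split; [|lra]. nra.
  - destruct (Rle_lt_dec t 0) as [Ht0|Ht0].
    +
      assert (Hg : E (fun z => z - tanh z) = m - t).
      { rewrite (E_lin L E hE (fun z => z) tanh 1 (-1)); try apply cont_tanh; try apply cont_id.
        fold t m. ring. intro x. ring. }
      assert (E (fun z => z - tanh z) <= 2 * L * D).
      { apply (E_bound L E hE).
        - change (continuity (minus_fct (fun z => z) tanh)). apply continuity_minus. apply cont_id. apply cont_tanh.
        - intros x Hx. apply pointA1; auto. }
      pose proof (tanh_le_id m Hm). fold T in H0.
      split; nra.
    +
      assert (Ht1 : t < 1) by lra.
      set (q := (1 + t) / (1 - t)).
      assert (Hq : 1 < q).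
      { unfold q. apply Rmult_lt_reg_r with (1 - t); [lra|]. unfold Rdiv. rewrite Rmult_assoc, Rinv_l; lra. }
      set (a := ln q / 2).
      assert (Ha : 0 <= a).
      { unfold a. pose proof (ln_increasing 1 q ltac:(lra) Hq). rewrite ln_1 in H. lra. }
      assert (Hta : tanh a = t).
      { rewrite tanh_exp. replace (2 * a) with (ln q) by (unfold a; field).
        rewrite exp_ln by lra. unfold q. field. split; lra. }
      assert (Hd : T - t <= (1 - t^2) * (m - a)).
      { pose proof (tanh_shift a (m - a)) as Hsh. replace (a + (m - a)) with m in Hsh by ring.
        fold T in Hsh. rewrite Hta in Hsh.
        pose proof (tanh_bounds (m - a)).
        assert (0 < 1 + t * tanh (m - a)) by nra.
        destruct (Rlt_le_dec (m - a) 0) as [Hn|Hp].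
        - pose proof (tanh_neg _ Hn). exfalso.
          assert (0 < (T - t) * (1 + t * tanh (m - a))) by (apply Rmult_lt_0_compat; lra).
          assert (0 < - tanh (m - a) * (1 - t^2)) by (apply Rmult_lt_0_compat; nra).
          lra.
        - pose proof (tanh_le_id _ Hp).
          assert (0 <= tanh (m - a)) by (destruct (Req_dec (m - a) 0) as [->|]; [rewrite tanh_0; lra| pose proof (tanh_pos (m - a)); lra]).
          assert (0 <= (T - t) * (t * tanh (m - a))) by (apply Rmult_le_pos; nra).
          assert (tanh (m - a) * (1 - t^2) <= (m - a) * (1 - t^2)) by (apply Rmult_le_compat_r; nra).
          nra. }
      assert (Hg : E (fun z => (1 - t^2) * (z - a)) = (1 - t^2) * (m - a)).
      { rewrite (E_lin3 L E hE (fun z => z) (fun z => z) (1 - t^2) 0 (-(1 - t^2) * a)); try apply cont_id.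
        fold m. ring. intro x. ring. }
      assert (E (fun z => (1 - t^2) * (z - a)) <= 4 * L * D).
      { apply (E_bound L E hE).
        - replace (fun z => (1 - t^2) * (z - a)) with (fun z => (1 - t^2) * z + (- (1 - t^2) * a) * 1).
          2:{ apply functional_extensionality; intro; ring. }
          apply cont_lin. apply cont_id. apply cont_const.
        - intros x Hx. apply pointA2; auto. }
      split; nra.
Qed.

Lemma refl_exp L E (hE : is_bounded_expectation L E) :
  is_bounded_expectation L (fun f => E (fun x => f (- x))).
Proof.
  constructor.
  - intros f g a b Hf Hg. apply (bexp_linear L E hE); apply cont_neg; auto.
  - intros f Hf Hpos. apply (bexp_pos L E hE). apply cont_neg; auto.
    intros x Hx. apply Hpos. lra.
  - apply (bexp_one L E hE).
Qed.

Theorem mainTheorem8 (L : R) (E : (R -> R) -> R)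
  (hL : 1 <= L) (hE : is_bounded_expectation L E) :
  Rabs (tanh (E (fun z => z)) - E tanh)
    <= 20 * L * E (fun z => Rabs (tanh z - E tanh)).
Proof.
  assert (HD : 0 <= E (fun z => Rabs (tanh z - E tanh))).
  { apply Rle_trans with (E (fun _ => 0)); [rewrite (E_const L E hE); lra|]. apply (E_mono L E hE).
    apply cont_const. apply cont_abs. intros; apply Rabs_pos. }
  apply Rle_trans with (4 * L * E (fun z => Rabs (tanh z - E tanh))); [|nra].
  destruct (Rle_lt_dec 0 (E (fun z => z))) as [Hm|Hm].
  - apply main_pos; auto.
  - set (E' := fun f : R -> R => E (fun x => f (- x))).
    pose proof (refl_exp L E hE) as hE'. fold E' in hE'.
    assert (Hm' : E' (fun z => z) = - E (fun z => z)).
    { unfold E'. rewrite (E_lin L E hE (fun z => z) (fun z => z) (-1) 0); try apply cont_id. ring. intro; ring. }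
    assert (Ht' : E' tanh = - E tanh).
    { unfold E'. rewrite (E_lin L E hE tanh tanh (-1) 0); try apply cont_tanh. ring. intro; rewrite tanh_odd; ring. }
    assert (HD' : E' (fun z => Rabs (tanh z - E' tanh)) = E (fun z => Rabs (tanh z - E tanh))).
    { unfold E' at 1. rewrite Ht'. f_equal. apply functional_extensionality. intro x.
      rewrite tanh_odd. rewrite <- Rabs_Ropp. f_equal. ring. }
    pose proof (main_pos L E' hL hE' ltac:(lra)) as H.
    rewrite HD', Hm', Ht', tanh_odd in H.
    replace (tanh (E (fun z => z)) - E tanh) with (- (- tanh (E (fun z => z)) - - E tanh)) by ring.
    rewrite Rabs_Ropp. exact H.
Qed.
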